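(* There is a universal constant $\alpha>0$ such that the following holds. Let $1/2<r\le1$ and $\beta_0,\beta_1>0$ with $\beta_0+\beta_1\zeta(2r)=1$, and let \[ K_1(x,y)=\beta_0+\beta_1\sum_{k=1}^\infty k^{-2r}\cos(2\pi k(x-y)),\qquad x,y\in\mathbb{T}. \] Then $K_1(x,x)=1$ for all $x\in\mathbb{T}$ and \[ K_1(x,y)\ge1-\alpha\,d_{\mathbb{T}}(x,y)^{2r-1}\quad\text{for all }x,y\in\mathbb{T}\text{ with }d_{\mathbb{T}}(x,y)\le\frac{1}{\sqrt2\,\pi}, \] i.e. the local lower bound $K_1(x,y)\ge1-\alpha\,d_{\mathbb{T}}(x,y)^p$ holds with $p=2r-1$ and $R_0=1/(\sqrt2\,\pi)$.
   Context: $\mathbb{T}=[0,1)$ is the one-dimensional torus with metric $d_{\mathbb{T}}(x,y):=\min_{k\in\{-1,0,1\}}|x-y+k|$; $\zeta$ is the Riemann zeta function. $K_1$ is the reproducing kernel of the one-dimensional Korobov space of smoothness $r$. *)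

(* Defs.v *)
From Stdlib Require Import Reals.
From Coquelicot Require Import Coquelicot.
Open Scope R_scope.

Definition in_torus (x : R) : Prop := 0 <= x < 1.

Definition dT (x y : R) : R :=
  Rmin (Rabs (x - y - 1)) (Rmin (Rabs (x - y)) (Rabs (x - y + 1))).

(* real power t^p for t >= 0, with the convention 0^p = 0 (used for p > 0) *)
Definition rpow (t p : R) : R :=
  if Req_EM_T t 0 then 0 else Rpower t p.

Definition zeta (s : R) : R :=
  Series (fun n : nat => Rpower (INR (S n)) (- s)).

Definition K1 (r beta0 beta1 x y : R) : R :=
  beta0 + beta1 *
    Series (fun n : nat =>
      Rpower (INR (S n)) (- (2 * r)) * cos (2 * PI * INR (S n) * (x - y))).

(* Main.v *)
Require Import Defs.
From Stdlib Require Import Reals Lra Lia Arith.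
From Coquelicot Require Import Coquelicot.
Open Scope R_scope.

Lemma ln_le_xm1 x : 0 < x -> ln x <= x - 1.
Proof. intros H. pose proof (exp_ineq1_le (ln x)). rewrite exp_ln in H0; lra. Qed.

Lemma expS a b : exp (a + b) = exp a * exp b.
Proof. apply exp_plus. Qed.

Lemma L1 s m : 0 < s -> 1 <= m ->
  s * exp (-(1+s) * ln (m+1)) <= exp (- s * ln m) - exp (- s * ln (m+1)).
Proof.
  intros Hs Hm.
  set (a := ln (m+1)). set (b := ln m).
  assert (Hab : 1/(m+1) <= a - b).
  { unfold a, b. assert (0 < m/(m+1)) by (apply Rdiv_lt_0_compat; lra). pose proof (ln_le_xm1 (m/(m+1)) H).
    rewrite ln_div in H0 by lra.
    assert (m/(m+1) - 1 = - (1/(m+1))) by (field; lra). lra. }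
  assert (E1 : exp (- s * b) = exp (- s * a) * exp (s * (a - b))).
  { rewrite <- exp_plus. f_equal. ring. }
  assert (E2 : exp (-(1+s) * a) = exp (- s * a) * / (m+1)).
  { replace (-(1+s)*a) with (- s * a + - a) by ring. rewrite exp_plus.
    rewrite exp_Ropp. unfold a. rewrite exp_ln by lra. reflexivity. }
  pose proof (exp_ineq1_le (s * (a - b))).
  pose proof (exp_pos (- s * a)).
  rewrite E1, E2.
  assert (s * / (m+1) <= s * (a - b)).
  { apply Rmult_le_compat_l; lra. }
  nra.
Qed.

Lemma L2 s m : 0 < s -> 1 <= m ->
  exp (- s * ln m) - exp (- s * ln (m+1)) <= s * exp (-(1+s) * ln m).
Proof.
  intros Hs Hm.
  set (a := ln (m+1)). set (b := ln m).
  assert (Hab : a - b <= 1/m).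
  { unfold a, b. assert (0 < (m+1)/m) by (apply Rdiv_lt_0_compat; lra). pose proof (ln_le_xm1 ((m+1)/m) H).
    rewrite ln_div in H0 by lra.
    assert ((m+1)/m - 1 = 1/m) by (field; lra). lra. }
  assert (E1 : exp (- s * a) = exp (- s * b) * exp (- s * (a - b))).
  { rewrite <- exp_plus. f_equal. ring. }
  assert (E2 : exp (-(1+s) * b) = exp (- s * b) * / m).
  { replace (-(1+s)*b) with (- s * b + - b) by ring. rewrite exp_plus.
    rewrite exp_Ropp. unfold b. rewrite exp_ln by lra. reflexivity. }
  pose proof (exp_ineq1_le (- s * (a - b))).
  pose proof (exp_pos (- s * b)).
  rewrite E1, E2.
  assert (s * (a - b) <= s * / m).
  { apply Rmult_le_compat_l; lra. }
  nra.
Qed.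

Lemma sin_sq_pos z : 0 < z -> sin z * sin z <= z * z.
Proof.
  intros H. pose proof (sin_lt_x z H). pose proof (SIN_bound z).
  destruct (Rle_lt_dec 1 z).
  - nra.
  - assert (0 < sin z). { apply sin_gt_0; try lra. pose proof PI_4. pose proof PI2_1. lra. }
    nra.
Qed.

Lemma one_minus_cos x : 1 - cos x <= x * x / 2.
Proof.
  replace x with (2 * (x/2)) at 1 by field.
  rewrite cos_2a_sin.
  set (y := x/2).
  assert (sin y * sin y <= y * y).
  { destruct (Rtotal_order y 0) as [H|[H|H]].
    - replace y with (- - y) by ring. rewrite sin_neg.
      pose proof (sin_sq_pos (-y) ltac:(lra)). nra.
    - rewrite H, sin_0. lra.
    - apply sin_sq_pos; auto. }
  unfold y in *. nra.
Qed.

Lemma sumS (a : nat -> R) n : sum_n a (S n) = sum_n a n + a (S n).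
Proof. rewrite sum_Sn. reflexivity. Qed.
Lemma sum0 (a : nat -> R) : sum_n a 0%nat = a 0%nat.
Proof. rewrite sum_O. reflexivity. Qed.

Lemma tele_up (u c : nat -> R) : (forall n, u (S n) <= c n - c (S n)) ->
  forall n, sum_n u n <= u 0%nat + c 0%nat - c n.
Proof.
  intros H n. induction n.
  - rewrite sum0. lra.
  - rewrite sumS. specialize (H n). lra.
Qed.

Lemma tele_lo (u c : nat -> R) : (forall n, c n - c (S n) <= u n) ->
  forall n, c 0%nat - c (S n) <= sum_n u n.
Proof.
  intros H n. induction n.
  - rewrite sum0. specialize (H 0%nat). lra.
  - rewrite sumS. specialize (H (S n)). lra.
Qed.

Lemma Series_ub a M : ex_series a -> (forall n, sum_n a n <= M) -> Series a <= M.
Proof.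
  intros He H. pose proof (Series_correct a He) as Hc.
  assert (Rbar_le (Series a) M).
  { apply (is_lim_seq_le (sum_n a) (fun _ => M)); auto.
    apply is_lim_seq_const. }
  simpl in H0. exact H0.
Qed.

Lemma sum_mono (a : nat -> R) : (forall k, 0 <= a k) -> forall n m, (n <= m)%nat -> sum_n a n <= sum_n a m.
Proof.
  intros Ha n m Hnm. induction Hnm.
  - lra.
  - rewrite sumS. specialize (Ha (S m)). lra.
Qed.

Lemma Series_lb a n : ex_series a -> (forall k, 0 <= a k) -> sum_n a n <= Series a.
Proof.
  intros He Ha. pose proof (Series_correct a He) as Hc.
  assert (Rbar_le (sum_n a n) (Series a)).
  { apply (is_lim_seq_le_loc (fun _ => sum_n a n) (sum_n a)); auto.
    - exists n. intros m Hm. apply sum_mono; auto.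
    - apply is_lim_seq_const. }
  simpl in H. exact H.
Qed.

Lemma ex_series_bd a M : (forall n, 0 <= a n) -> (forall n, sum_n a n <= M) -> ex_series a.
Proof.
  intros Ha H.
  destruct (ex_finite_lim_seq_incr (sum_n a) M) as [l Hl].
  - intros n. rewrite sumS. specialize (Ha (S n)). lra.
  - exact H.
  - exists l. exact Hl.
Qed.

Lemma exp_mono x y : x <= y -> exp x <= exp y.
Proof.
  intros H. destruct (Rle_lt_or_eq_dec x y H) as [H1|H1].
  - left. apply exp_increasing; auto.
  - subst. lra.
Qed.

Lemma cos_shift k t t' : (t' = t-1 \/ t' = t \/ t' = t+1) ->
  cos (2*PI*INR k * t) = cos (2*PI*INR k * t').
Proof.
  intros [H|[H|H]]; subst.
  - rewrite <- (cos_period (2*PI*INR k*(t-1)) k). f_equal. ring.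
  - reflexivity.
  - rewrite <- (cos_period (2*PI*INR k*t) k). f_equal. ring.
Qed.

Lemma dT_witness x y : exists t', Rabs t' = dT x y /\
  (t' = (x-y)-1 \/ t' = x-y \/ t' = (x-y)+1).
Proof.
  unfold dT, Rmin.
  destruct (Rle_dec (Rabs (x - y)) (Rabs (x - y + 1)));
  destruct (Rle_dec (Rabs (x - y - 1)) _).
  all: first [ exists (x-y-1); split; [reflexivity| left; ring]
             | exists (x-y); split; [reflexivity| right; left; ring]
             | exists (x-y+1); split; [reflexivity| right; right; ring]].
Qed.

Definition A s j := exp (-(1+s) * ln (INR (S j))).
Definition g s k := exp (- s * ln (INR k)).

Lemma INR_ge1 j : (1 <= j)%nat -> 1 <= INR j.
Proof. intros H. apply le_INR in H. simpl in H. exact H. Qed.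

Lemma A_up s j : 0 < s -> (1 <= j)%nat -> s * A s j <= g s j - g s (S j).
Proof.
  intros Hs Hj. unfold A, g. rewrite !S_INR. apply L1; auto. apply INR_ge1; auto.
Qed.

Lemma A_lo s j : 0 < s -> g s (S j) - g s (S (S j)) <= s * A s j.
Proof.
  intros Hs. unfold A, g. rewrite (S_INR (S j)). apply L2; auto.
  apply INR_ge1; lia.
Qed.

Lemma A_pos s j : 0 < A s j.
Proof. apply exp_pos. Qed.
Lemma g_pos s j : 0 < g s j.
Proof. apply exp_pos. Qed.

Lemma A0 s : A s 0 = 1.
Proof. unfold A. simpl INR. rewrite ln_1, Rmult_0_r, exp_0. reflexivity. Qed.
Lemma g1 s : g s 1 = 1.
Proof. unfold g. simpl INR. rewrite ln_1, Rmult_0_r, exp_0. reflexivity. Qed.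

Lemma sumA_bd s n : 0 < s -> sum_n (A s) n <= 1 + 1/s.
Proof.
  intros Hs.
  pose proof (tele_up (A s) (fun n => g s (S n) / s)) as T.
  assert (H : forall n, A s (S n) <= g s (S n) / s - g s (S (S n)) / s).
  { intros k. pose proof (A_up s (S k) Hs ltac:(lia)).
    apply (Rmult_le_reg_l s); auto.
    replace (s * (g s (S k) / s - g s (S (S k)) / s)) with (g s (S k) - g s (S (S k))) by (field; lra).
    lra. }
  specialize (T H n). simpl in T. rewrite A0, g1 in T.
  pose proof (g_pos s (S n)).
  assert (0 < g s (S n) / s) by (apply Rdiv_lt_0_compat; auto).
  lra.
Qed.

Lemma exA s : 0 < s -> ex_series (A s).
Proof.
  intros Hs. apply (ex_series_bd _ (1 + 1/s)).
  - intros; left; apply A_pos.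
  - intros; apply sumA_bd; auto.
Qed.

Lemma SeriesA_lb s : 0 < s -> 1/(2*s) <= Series (A s).
Proof.
  intros Hs.
  pose proof (tele_lo (A s) (fun n => g s (S n) / s)) as T.
  assert (H : forall n, g s (S n) / s - g s (S (S n)) / s <= A s n).
  { intros k. pose proof (A_lo s k Hs).
    apply (Rmult_le_reg_l s); auto.
    replace (s * (g s (S k) / s - g s (S (S k)) / s)) with (g s (S k) - g s (S (S k))) by (field; lra).
    lra. }
  set (X := exp (ln 2 / s)).
  destruct (nfloor_ex X) as [n Hn]. { left; apply exp_pos. }
  specialize (T H n). simpl in T. rewrite g1 in T.
  assert (Hg : g s (S (S n)) <= / 2).
  { unfold g. rewrite <- (exp_ln 2) by lra. rewrite <- exp_Ropp. apply exp_mono.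
    assert (ln X < ln (INR (S (S n)))).
    { apply ln_increasing. apply exp_pos. rewrite !S_INR. lra. }
    unfold X in H0. rewrite ln_exp in H0.
    assert (s * (ln 2 / s) <= s * ln (INR (S (S n)))) by (apply Rmult_le_compat_l; lra).
    replace (s * (ln 2 / s)) with (ln 2) in H1 by (field; lra). lra. }
  pose proof (Series_lb (A s) n (exA s Hs) (fun k => Rlt_le _ _ (A_pos s k))).
  assert (g s (S (S n)) / s <= /2 / s).
  { unfold Rdiv. apply Rmult_le_compat_r; auto. left; apply Rinv_0_lt_compat; auto. }
  assert (1/(2*s) = 1/s - /2/s) by (field; lra).
  rewrite H2. set (u := 1/s) in *. set (v := /2/s) in *. set (w := g s (S (S n)) / s) in *. clearbody u v w. assert (E : sum_n (A s) n <= Series (A s)) by exact H0. lra.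
Qed.

Lemma term_small s d t' j N : 0 < s -> s <= 1 -> 0 < d -> Rabs t' = d -> (S j <= N)%nat ->
  A s j * (1 - cos (2*PI*INR (S j) * t')) <= 2*PI^2*d^2 * exp ((1-s) * ln (INR N)).
Proof.
  intros Hs Hs1 Hd Ht HjN.
  set (k := INR (S j)).
  assert (Hk : 1 <= k) by (apply INR_ge1; lia).
  assert (HkN : k <= INR N) by (apply le_INR; auto).
  assert (Htt : t' * t' = d * d) by (rewrite <- Ht; unfold Rabs; destruct Rcase_abs; ring).
  pose proof (one_minus_cos (2*PI*k*t')) as Hc.
  assert (E1 : (2*PI*k*t') * (2*PI*k*t') / 2 = 2*PI^2*d^2 * (k*k)).
  { replace ((2*PI*k*t') * (2*PI*k*t')) with (4*PI*PI*k*k*(t'*t')) by ring.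
    rewrite Htt. field. }
  rewrite E1 in Hc.
  assert (E2 : A s j * (k * k) = exp ((1-s) * ln k)).
  { unfold A. fold k. 
    replace ((1-s) * ln k) with (-(1+s) * ln k + ln k + ln k) by ring.
    rewrite !exp_plus, exp_ln by lra. ring. }
  assert (HA := A_pos s j).
  assert (exp ((1-s) * ln k) <= exp ((1-s) * ln (INR N))).
  { apply exp_mono. apply Rmult_le_compat_l; [lra|]. apply ln_le; lra. }
  assert (0 <= 2*PI^2*d^2) by (pose proof PI_RGT_0; nra).
  assert (A s j * (1 - cos (2 * PI * k * t')) <= A s j * (2 * PI ^ 2 * d ^ 2 * (k * k))).
  { apply Rmult_le_compat_l; lra. }
  replace (A s j * (2 * PI ^ 2 * d ^ 2 * (k * k))) with (2 * PI ^ 2 * d ^ 2 * (A s j * (k * k))) in H1 by ring.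
  rewrite E2 in H1.
  assert (2 * PI ^ 2 * d ^ 2 * exp ((1-s) * ln k) <= 2 * PI ^ 2 * d ^ 2 * exp ((1-s) * ln (INR N))).
  { apply Rmult_le_compat_l; lra. }
  lra.
Qed.

Lemma term_large s t' j : 0 < s -> (1 <= j)%nat ->
  A s j * (1 - cos (2*PI*INR (S j) * t')) <= 2/s * (g s j - g s (S j)).
Proof.
  intros Hs Hj. pose proof (A_up s j Hs Hj). pose proof (A_pos s j).
  pose proof (COS_bound (2*PI*INR (S j) * t')).
  assert (A s j * (1 - cos (2*PI*INR (S j) * t')) <= 2 * A s j) by nra.
  assert (2 * A s j <= 2/s * (g s j - g s (S j))).
  { apply (Rmult_le_reg_l s); auto.
    replace (s * (2/s * (g s j - g s (S j)))) with (2 * (g s j - g s (S j))) by (field; lra).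
    lra. }
  lra.
Qed.

Lemma psum_bd s d t' N : 0 < s -> s <= 1 -> 0 < d -> Rabs t' = d -> (1 <= N)%nat ->
  forall n, sum_n (fun j => A s j * (1 - cos (2*PI*INR (S j) * t'))) n <=
    INR N * (2*PI^2*d^2 * exp ((1-s) * ln (INR N))) + 2/s * g s N.
Proof.
  intros Hs Hs1 Hd Ht HN.
  set (B := fun j => A s j * (1 - cos (2*PI*INR (S j) * t'))).
  set (C1 := 2*PI^2*d^2 * exp ((1-s) * ln (INR N))).
  assert (HC1 : 0 <= C1).
  { unfold C1. pose proof (exp_pos ((1-s) * ln (INR N))). pose proof PI_RGT_0.
    assert (0 <= 2*PI^2*d^2) by nra. nra. }
  assert (P : forall n, sum_n B n <=
     match le_lt_dec (S n) N with
     | left _ => INR (S n) * C1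
     | right _ => INR N * C1 + 2/s * (g s N - g s (S n)) end).
  { induction n.
    - rewrite sum0. destruct (le_lt_dec 1 N); [|lia].
      unfold B, C1. simpl INR at 2. rewrite Rmult_1_l. apply term_small; auto.
    - rewrite sumS. 
      assert (TS : (S (S n) <= N)%nat -> B (S n) <= C1) by (intros; apply term_small; auto).
      assert (TL : B (S n) <= 2/s * (g s (S n) - g s (S (S n)))) by (apply term_large; auto; lia).
      destruct (le_lt_dec (S (S n)) N) as [h1|h1];
      destruct (le_lt_dec (S n) N) as [h2|h2] in IHn; try lia.
      + specialize (TS h1). rewrite (S_INR (S n)). lra.
      + assert (S n = N) by lia. subst N. lra.
      + lra. }
  intros n. specialize (P n). fold B.
  pose proof (g_pos s (S n)). pose proof (g_pos s N).
  destruct (le_lt_dec (S n) N) as [h|h].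
  - apply le_INR in h. assert (0 <= 2/s * g s N) by (unfold Rdiv; pose proof (Rinv_0_lt_compat s Hs); nra).
    nra.
  - assert (0 <= 2/s * g s (S n)) by (unfold Rdiv; pose proof (Rinv_0_lt_compat s Hs); nra).
    assert (2/s * (g s N - g s (S n)) = 2/s * g s N - 2/s * g s (S n)) by ring. lra.
Qed.

Lemma main_bound s d t' beta1 : 0 < s -> s <= 1 -> 0 < d -> 2 * d < 1 -> Rabs t' = d ->
  0 <= beta1 -> beta1 <= 2 * s ->
  ex_series (fun j => A s j * (1 - cos (2*PI*INR (S j) * t'))) /\
  beta1 * Series (fun j => A s j * (1 - cos (2*PI*INR (S j) * t'))) <= 100 * exp (s * ln d).
Proof.
  intros Hs Hs1 Hd Hd3 Ht Hb0 Hb1.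
  destruct (nfloor_ex (1/d)) as [N HN]. { left; apply Rdiv_lt_0_compat; lra. }
  assert (Hid : d * (1/d) = 1) by (field; lra).
  assert (HN1 : d * INR N <= 1).
  { assert (d * INR N <= d * (1/d)) by (apply Rmult_le_compat_l; lra). lra. }
  assert (HN2 : 1/2 <= d * INR N).
  { assert (d * (1/d) < d * (INR N + 1)) by (apply Rmult_lt_compat_l; lra). lra. }
  assert (HNr : 1 <= INR N) by nra.
  assert (HNn : (1 <= N)%nat).
  { destruct N; [simpl in HNr; lra | lia]. }
  set (B := fun j => A s j * (1 - cos (2*PI*INR (S j) * t'))).
  set (C1 := 2*PI^2*d^2 * exp ((1-s) * ln (INR N))).
  set (M := INR N * C1 + 2/s * g s N).
  assert (PS : forall n, sum_n B n <= M) by (intros n; apply psum_bd; auto).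
  assert (HB0 : forall n, 0 <= B n).
  { intros n. unfold B. pose proof (A_pos s n). pose proof (COS_bound (2*PI*INR (S n) * t')). nra. }
  assert (EX : ex_series B) by (apply (ex_series_bd B M); auto).
  split; [exact EX|].
  assert (SB : Series B <= M) by (apply Series_ub; auto).
  assert (HM0 : 0 <= M).
  { unfold M, C1. pose proof (exp_pos ((1-s) * ln (INR N))). pose proof PI_RGT_0.
    pose proof (g_pos s N). pose proof (Rinv_0_lt_compat s Hs). unfold Rdiv.
    assert (0 <= 2*PI^2*d^2) by nra. assert (0 <= 2 * / s * g s N) by nra.
    assert (0 <= 2*PI^2*d^2 * exp ((1-s) * ln (INR N))) by (apply Rmult_le_pos; lra).
    assert (0 <= INR N * (2*PI^2*d^2 * exp ((1-s) * ln (INR N)))) by (apply Rmult_le_pos; lra). lra. }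
  assert (Hsum : ln d + ln (INR N) <= 0).
  { rewrite <- ln_mult by lra. rewrite <- ln_1. apply ln_le; nra. }
  assert (Hsum2 : - ln 2 <= ln d + ln (INR N)).
  { rewrite <- ln_mult by lra. rewrite <- ln_Rinv by lra. apply ln_le; try lra. }
  assert (Hl2 : 0 < ln 2) by (rewrite <- ln_1; apply ln_increasing; lra).
  set (E := exp (s * ln d)).
  assert (F1 : INR N * C1 <= 2 * PI^2 * E).
  { assert (X : INR N * C1 = 2 * PI^2 * exp (ln d + ln d + ln (INR N) + (1-s) * ln (INR N))).
    { unfold C1. rewrite !exp_plus. rewrite (exp_ln d) by lra. rewrite exp_ln by lra. ring. }
    rewrite X. apply Rmult_le_compat_l. { pose proof PI_RGT_0. nra. }
    apply exp_mono. nra. }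
  assert (F2 : g s N <= 2 * E).
  { unfold g, E. rewrite <- (exp_ln 2) by lra. rewrite <- exp_plus. apply exp_mono.
    nra. }
  assert (beta1 * Series B <= beta1 * M) by (apply Rmult_le_compat_l; auto).
  assert (beta1 * M <= 2 * s * M) by (apply Rmult_le_compat_r; auto).
  assert (2 * s * M = 2 * s * (INR N * C1) + 4 * g s N) by (unfold M; field; lra).
  assert (0 < E) by apply exp_pos.
  pose proof PI_4. pose proof PI_RGT_0.
  assert (2 * s * (INR N * C1) <= 2 * s * (2 * PI^2 * E)) by (apply Rmult_le_compat_l; lra).
  assert (PI^2 <= 16) by nra.
  assert (s * PI^2 <= 16) by (assert (0 <= PI^2) by nra; nra).
  assert (s * PI^2 * E <= 16 * E) by (apply Rmult_le_compat_r; lra).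
  assert (2 * s * (2 * PI^2 * E) <= 64 * E).
  { replace (2 * s * (2 * PI^2 * E)) with (4 * (s * PI^2 * E)) by ring. lra. }
  lra.
Qed.

Theorem lemma3p5 :
  exists alpha : R, 0 < alpha /\
    forall r beta0 beta1 : R,
      1 / 2 < r <= 1 ->
      0 < beta0 -> 0 < beta1 ->
      beta0 + beta1 * zeta (2 * r) = 1 ->
      (forall x : R, in_torus x -> K1 r beta0 beta1 x x = 1) /\
      (forall x y : R, in_torus x -> in_torus y ->
         dT x y <= 1 / (sqrt 2 * PI) ->
         K1 r beta0 beta1 x y >= 1 - alpha * rpow (dT x y) (2 * r - 1)).
Proof.
  exists 100. split; [lra|].
  intros r beta0 beta1 Hr Hb0 Hb1 Hsum.
  set (s := 2 * r - 1).
  assert (Hs : 0 < s) by (unfold s; lra).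
  assert (Hs1 : s <= 1) by (unfold s; lra).
  assert (HAeq : forall n, Rpower (INR (S n)) (- (2 * r)) = A s n).
  { intros n. unfold Rpower, A, s. f_equal. ring. }
  assert (HZ : zeta (2 * r) = Series (A s)).
  { unfold zeta. apply Series_ext. exact HAeq. }
  rewrite HZ in Hsum.
  assert (Hbs : beta1 <= 2 * s).
  { pose proof (SeriesA_lb s Hs).
    assert (beta1 * (1/(2*s)) <= beta1 * Series (A s)) by (apply Rmult_le_compat_l; lra).
    assert (beta1 * (1/(2*s)) < 1) by lra.
    assert (beta1 * (1/(2*s)) * (2*s) = beta1) by (field; lra).
    assert (beta1 * (1/(2*s)) * (2*s) <= 1 * (2*s)) by (apply Rmult_le_compat_r; lra).
    lra. }
  assert (Hzero : forall t', t' = 0 -> K1 r beta0 beta1 t' 0 = 1).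
  { intros t' ->. unfold K1. rewrite <- Hsum. f_equal. f_equal. apply Series_ext.
    intros n. rewrite HAeq. replace (2 * PI * INR (S n) * (0 - 0)) with 0 by ring.
    rewrite cos_0. ring. }
  split.
  - intros x _. rewrite <- (Hzero 0) by reflexivity. unfold K1.
    f_equal. f_equal. apply Series_ext. intros n. f_equal. f_equal. ring.
  - intros x y Hx Hy Hd.
    destruct (dT_witness x y) as [t' [Ht' Hsh]].
    assert (HK : K1 r beta0 beta1 x y =
       beta0 + beta1 * Series (fun n => A s n * cos (2*PI*INR (S n) * t'))).
    { unfold K1. f_equal. f_equal. apply Series_ext. intros n. rewrite HAeq.
      f_equal. apply cos_shift. exact Hsh. }
    unfold rpow. destruct (Req_EM_T (dT x y) 0) as [H0|H0].
    + assert (t' = 0).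
      { rewrite H0 in Ht'. destruct (Req_dec t' 0); auto. exfalso.
        pose proof (Rabs_pos_lt t' H). lra. }
      subst t'. rewrite HK. rewrite <- (Hzero 0) by reflexivity. unfold K1.
      assert (Series (fun n => A s n * cos (2 * PI * INR (S n) * 0)) =
              Series (fun n => Rpower (INR (S n)) (- (2 * r)) * cos (2 * PI * INR (S n) * (0 - 0)))).
      { apply Series_ext. intros n. rewrite HAeq. f_equal. f_equal. ring. }
      rewrite H. lra.
    + set (d := dT x y) in *.
      assert (Hdpos : 0 < d).
      { pose proof (Rabs_pos t'). rewrite Ht' in H. lra. }
      assert (Hd2 : 2 * d < 1).
      { assert (1 < sqrt 2).
        { rewrite <- sqrt_1. apply sqrt_lt_1; lra. }
        pose proof PI2_1.
        assert (2 < sqrt 2 * PI) by nra.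
        assert (d * (sqrt 2 * PI) <= 1 / (sqrt 2 * PI) * (sqrt 2 * PI)).
        { apply Rmult_le_compat_r; lra. }
        replace (1 / (sqrt 2 * PI) * (sqrt 2 * PI)) with 1 in H3 by (field; lra).
        assert (d * 2 < d * (sqrt 2 * PI)) by (apply Rmult_lt_compat_l; lra).
        lra. }
      destruct (main_bound s d t' beta1 Hs Hs1 Hdpos Hd2 Ht' ltac:(lra) Hbs) as [EX Bd].
      rewrite HK.
      assert (Series (fun n => A s n * cos (2 * PI * INR (S n) * t')) =
              Series (A s) - Series (fun j => A s j * (1 - cos (2*PI*INR (S j) * t')))).
      { rewrite <- Series_minus; auto. apply Series_ext. intros n. ring. apply exA; auto. }
      rewrite H.
      unfold Rpower. fold s. lra.
Qed.
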